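(* For each $n\in\mathbb{N}$, $\mathrm{WR}\Sigma_0(\Sigma_n)\vdash\mathrm{B}\Sigma_{n+2}$.
   Context: All theories contain $\mathrm{PA}^-$; $\mathrm{B}\Sigma_k$ is $\Sigma_k$-collection together with $\mathrm{I}\Delta_0$. $\Sigma_0(\Sigma_n)$ is the closure of the $\Sigma_n$ formulas under Boolean operations and bounded quantification. For a formula $\phi(x,y)$ (possibly with further free variables), $\mathrm{WR}\phi$ is the universal closure of $\forall x\,\exists y<a\,\phi(x,y)\to\exists y<a\,\forall b\,\exists x>b\,\phi(x,y)$, and $\mathrm{WR}\Gamma=\mathrm{I}\Delta_0\cup\{\mathrm{WR}\phi:\phi\in\Gamma\}$. *)

(* Defs.v *)
Inductive term : Type :=
| tvar : nat -> term
| tzero : term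
| tone : term
| tplus : term -> term -> term
| ttimes : term -> term -> term.

(* Bounded quantifiers are primitive: [fBAll t φ] is  ∀x < t. φ  and
   [fBEx t φ] is ∃x < t. φ, where t is interpreted outside the binder
   (so x does not occur in t); the bound variable is de Bruijn index 0 in φ. *)
Inductive form : Type :=
| fEq : term -> term -> form
| fLt : term -> term -> form
| fBot : form
| fNot : form -> form
| fAnd : form -> form -> form
| fOr : form -> form -> form
| fImp : form -> form -> form
| fAll : form -> form
| fEx : form -> form
| fBAll : term -> form -> form
| fBEx : term -> form -> form.

Record structure : Type := {
  dom :> Type;
  zero : dom;
  one : dom;
  add : dom -> dom -> dom;
  mul : dom -> dom -> dom;
  lt : dom -> dom -> Prop
}.

Definition scons {A : Type} (x : A) (e : nat -> A) : nat -> A :=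
  fun n => match n with 0 => x | S k => e k end.

Fixpoint eval (M : structure) (e : nat -> M) (t : term) : M :=
  match t with
  | tvar n => e n
  | tzero => zero M
  | tone => one M
  | tplus a b => add M (eval M e a) (eval M e b)
  | ttimes a b => mul M (eval M e a) (eval M e b)
  end.

Fixpoint sat (M : structure) (e : nat -> M) (f : form) : Prop :=
  match f with
  | fEq a b => eval M e a = eval M e b
  | fLt a b => lt M (eval M e a) (eval M e b)
  | fBot => False
  | fNot p => ~ sat M e p
  | fAnd p q => sat M e p /\ sat M e q
  | fOr p q => sat M e p \/ sat M e q
  | fImp p q => sat M e p -> sat M e q
  | fAll p => forall x : M, sat M (scons x e) p
  | fEx p => exists x : M, sat M (scons x e) p
  | fBAll t p => forall x : M, lt M x (eval M e t) -> sat M (scons x e) p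
  | fBEx t p => exists x : M, lt M x (eval M e t) /\ sat M (scons x e) p
  end.

Inductive Delta0 : form -> Prop :=
| d0Eq a b : Delta0 (fEq a b)
| d0Lt a b : Delta0 (fLt a b)
| d0Bot : Delta0 fBot
| d0Not p : Delta0 p -> Delta0 (fNot p)
| d0And p q : Delta0 p -> Delta0 q -> Delta0 (fAnd p q)
| d0Or p q : Delta0 p -> Delta0 q -> Delta0 (fOr p q)
| d0Imp p q : Delta0 p -> Delta0 q -> Delta0 (fImp p q)
| d0BAll t p : Delta0 p -> Delta0 (fBAll t p)
| d0BEx t p : Delta0 p -> Delta0 (fBEx t p).

Inductive IsSigma : nat -> form -> Prop :=
| sig0 p : Delta0 p -> IsSigma 0 p
| sigPi n p : IsPi n p -> IsSigma (S n) p
| sigEx n p : IsSigma (S n) p -> IsSigma (S n) (fEx p)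
with IsPi : nat -> form -> Prop :=
| pi0 p : Delta0 p -> IsPi 0 p
| piSig n p : IsSigma n p -> IsPi (S n) p
| piAll n p : IsPi (S n) p -> IsPi (S n) (fAll p).

Inductive Sigma0Sigma (n : nat) : form -> Prop :=
| ssBase p : IsSigma n p -> Sigma0Sigma n p
| ssNot p : Sigma0Sigma n p -> Sigma0Sigma n (fNot p)
| ssAnd p q : Sigma0Sigma n p -> Sigma0Sigma n q -> Sigma0Sigma n (fAnd p q)
| ssOr p q : Sigma0Sigma n p -> Sigma0Sigma n q -> Sigma0Sigma n (fOr p q)
| ssImp p q : Sigma0Sigma n p -> Sigma0Sigma n q -> Sigma0Sigma n (fImp p q)
| ssBAll t p : Sigma0Sigma n p -> Sigma0Sigma n (fBAll t p)
| ssBEx t p : Sigma0Sigma n p -> Sigma0Sigma n (fBEx t p).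

(* M is a model of PA^- (Kaye's axiomatization: discretely ordered
   commutative semiring with least element 0). *)
Definition PAminus (M : structure) : Prop :=
  let O := zero M in let I := one M in
  let pl := add M in let ti := mul M in let lt := lt M in
  (forall x y z : M, pl x (pl y z) = pl (pl x y) z) /\
  (forall x y : M, pl x y = pl y x) /\
  (forall x y z : M, ti x (ti y z) = ti (ti x y) z) /\
  (forall x y : M, ti x y = ti y x) /\
  (forall x y z : M, ti x (pl y z) = pl (ti x y) (ti x z)) /\
  (forall x : M, pl x O = x /\ ti x O = O) /\
  (forall x : M, ti x I = x) /\
  (forall x : M, ~ lt x x) /\
  (forall x y z : M, lt x y -> lt y z -> lt x z) /\
  (forall x y : M, lt x y \/ x = y \/ lt y x) /\
  (forall x y z : M, lt x y -> lt (pl x z) (pl y z)) /\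
  (forall x y z : M, lt O z -> lt x y -> lt (ti x z) (ti y z)) /\
  (forall x y : M, lt x y -> exists z, pl x z = y) /\
  lt O I /\
  (forall x : M, lt O x -> (I = x \/ lt I x)) /\
  (forall x : M, O = x \/ lt O x).

Definition Ind_inst (M : structure) (p : form) : Prop :=
  forall e : nat -> M,
    sat M (scons (zero M) e) p ->
    (forall x : M, sat M (scons x e) p -> sat M (scons (add M x (one M)) e) p) ->
    forall x : M, sat M (scons x e) p.

Definition IDelta0 (M : structure) : Prop :=
  forall p, Delta0 p -> Ind_inst M p.

(* Collection axiom for φ(x, y, params):  y is variable 0, x is variable 1,
   the parameters are the remaining variables; a is a fresh variable.
   ∀x<a ∃y φ(x,y) → ∃b ∀x<a ∃y<b φ(x,y). *)
Definition Coll_inst (M : structure) (p : form) : Prop :=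
  forall (e : nat -> M) (a : M),
    (forall x : M, lt M x a -> exists y : M, sat M (scons y (scons x e)) p) ->
    exists b : M, forall x : M, lt M x a ->
      exists y : M, lt M y b /\ sat M (scons y (scons x e)) p.

Definition models_BSigma (k : nat) (M : structure) : Prop :=
  IDelta0 M /\ forall p, IsSigma k p -> Coll_inst M p.

(* WR φ for φ(x, y, params): y is variable 0, x is variable 1, the
   parameters are the remaining variables; a and b are fresh variables.
   ∀x ∃y<a φ(x,y) → ∃y<a ∀b ∃x>b φ(x,y). *)
Definition WR_inst (M : structure) (p : form) : Prop :=
  forall (e : nat -> M) (a : M),
    (forall x : M, exists y : M, lt M y a /\ sat M (scons y (scons x e)) p) ->
    exists y : M, lt M y a /\
      forall b : M, exists x : M, lt M b x /\ sat M (scons y (scons x e)) p.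

Definition models_WRSigma0Sigma (n : nat) (M : structure) : Prop :=
  IDelta0 M /\ forall p, Sigma0Sigma n p -> WR_inst M p.

(* Main.v *)
Require Import Defs.
From Stdlib Require Import Classical FunctionalExtensionality PeanoNat Lia.

Definition up (f : nat -> nat) : nat -> nat :=
  fun k => match k with 0 => 0 | S k => S (f k) end.

Fixpoint rent (f : nat -> nat) (t : term) : term :=
  match t with
  | tvar n => tvar (f n) | tzero => tzero | tone => tone
  | tplus a b => tplus (rent f a) (rent f b)
  | ttimes a b => ttimes (rent f a) (rent f b) end.

Fixpoint ren (f : nat -> nat) (p : form) : form :=
  match p with
  | fEq a b => fEq (rent f a) (rent f b)
  | fLt a b => fLt (rent f a) (rent f b)
  | fBot => fBot
  | fNot p => fNot (ren f p)
  | fAnd p q => fAnd (ren f p) (ren f q)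
  | fOr p q => fOr (ren f p) (ren f q)
  | fImp p q => fImp (ren f p) (ren f q)
  | fAll p => fAll (ren (up f) p)
  | fEx p => fEx (ren (up f) p)
  | fBAll t p => fBAll (rent f t) (ren (up f) p)
  | fBEx t p => fBEx (rent f t) (ren (up f) p)
  end.

Lemma eval_rent M e f t : eval M e (rent f t) = eval M (fun k => e (f k)) t.
Proof. induction t; simpl; congruence. Qed.

Lemma scons_up {A} (x : A) e f : (fun k => scons x e (up f k)) = scons x (fun k => e (f k)).
Proof. apply functional_extensionality; intros [|k]; reflexivity. Qed.

Lemma sat_ren M p : forall f e, sat M e (ren f p) <-> sat M (fun k => e (f k)) p.
Proof.
  induction p; intros f e; simpl; rewrite ?eval_rent; try tauto.
  - rewrite IHp; tauto.
  - rewrite IHp1, IHp2; tauto.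
  - rewrite IHp1, IHp2; tauto.
  - rewrite IHp1, IHp2; tauto.
  - split; intros H x; specialize (H x); rewrite IHp, scons_up in *; auto.
  - split; intros [x H]; exists x; rewrite IHp, scons_up in *; auto.
  - split; intros H x hx; specialize (H x hx); rewrite IHp, scons_up in *; auto.
  - split; intros [x [hx H]]; exists x; split; auto; rewrite IHp, scons_up in *; auto.
Qed.

Lemma Delta0_ren p : Delta0 p -> forall f, Delta0 (ren f p).
Proof. induction 1; intros f; simpl; constructor; auto. Qed.

Scheme IsSigma_mind := Induction for IsSigma Sort Prop
with IsPi_mind := Induction for IsPi Sort Prop.

Lemma ren_SigPi :
  (forall n p, IsSigma n p -> forall f, IsSigma n (ren f p)) /\
  (forall n p, IsPi n p -> forall f, IsPi n (ren f p)).
Proof.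
  split;
  [apply (IsSigma_mind (fun n p _ => forall f, IsSigma n (ren f p)) (fun n p _ => forall f, IsPi n (ren f p)))
  |apply (IsPi_mind (fun n p _ => forall f, IsSigma n (ren f p)) (fun n p _ => forall f, IsPi n (ren f p)))];
  intros; simpl; try (constructor; auto using Delta0_ren; fail).
Qed.

Lemma S0S_ren n p : Sigma0Sigma n p -> forall f, Sigma0Sigma n (ren f p).
Proof. induction 1; intros f; simpl; try (constructor; auto; fail). constructor. apply ren_SigPi; auto. Qed.

Lemma Delta0_SigPi p : Delta0 p -> forall m, IsSigma m p /\ IsPi m p.
Proof.
  intros H m; induction m.
  - split; constructor; auto.
  - destruct IHm; split; constructor; auto.
Qed.

Lemma SigPi_mono :
  (forall n p, IsSigma n p -> IsSigma (S n) p) /\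
  (forall n p, IsPi n p -> IsPi (S n) p).
Proof.
  split;
  [apply (IsSigma_mind (fun n p _ => IsSigma (S n) p) (fun n p _ => IsPi (S n) p))
  |apply (IsPi_mind (fun n p _ => IsSigma (S n) p) (fun n p _ => IsPi (S n) p))];
  intros; try (constructor; auto; fail).
  all: first [apply sigPi; apply pi0; auto | apply piSig; apply sig0; auto].
Qed.

Lemma S0S_mono1 n p : Sigma0Sigma n p -> Sigma0Sigma (S n) p.
Proof. induction 1; try (constructor; auto; fail). constructor. apply SigPi_mono; auto. Qed.

Lemma S0S_mono n m p : Sigma0Sigma n p -> n <= m -> Sigma0Sigma m p.
Proof. intros H Hle; induction Hle; auto using S0S_mono1. Qed.

Lemma S0S_0 p : Sigma0Sigma 0 p -> Delta0 p.
Proof. induction 1; try (constructor; auto; fail). inversion H; auto. Qed.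

Lemma SigPi_dual :
  (forall n p, IsSigma n p -> exists q, IsPi n q /\ forall M e, sat M e q <-> ~ sat M e p) /\
  (forall n p, IsPi n p -> exists q, IsSigma n q /\ forall M e, sat M e q <-> ~ sat M e p).
Proof.
  split;
  [apply (IsSigma_mind (fun n p _ => exists q, IsPi n q /\ forall M e, sat M e q <-> ~ sat M e p)
                       (fun n p _ => exists q, IsSigma n q /\ forall M e, sat M e q <-> ~ sat M e p))
  |apply (IsPi_mind (fun n p _ => exists q, IsPi n q /\ forall M e, sat M e q <-> ~ sat M e p)
                       (fun n p _ => exists q, IsSigma n q /\ forall M e, sat M e q <-> ~ sat M e p))];
  intros.
  all: try (exists (fNot p); split; [constructor; constructor; auto | simpl; tauto]; fail).
  all: try (destruct H as [q [Hq Hs]]; exists q; split; [constructor; auto | auto]; fail).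
  all: destruct H as [q [Hq Hs]].
  all: try (exists (fAll q); split; [constructor; auto|]; intros M e; simpl;
    setoid_rewrite Hs; split; [intros H [x Hx]; apply (H x Hx)|intros H x Hx; apply H; exists x; auto]; fail).
  all: try (exists (fEx q); split; [constructor; auto|]; intros M e; simpl;
    setoid_rewrite Hs; split; [intros [x Hx] H; apply Hx; auto|intros H; apply NNPP; intro H'; apply H; intro x; apply NNPP; intro; apply H'; exists x; auto]; fail).
Qed.


Section PA.
Variable M : structure.
Hypothesis HPA : PAminus M.

Ltac pa := pose proof HPA as HH; unfold PAminus in HH; cbv zeta in HH;
  destruct HH as (addA & addC & mulA & mulC & distr & add0mul0 & mul1 & irr & trans & trich & addmono & mulmono & subex & lt01 & pos1 & nonneg).

Definition mle (x y : M) := lt M x y \/ x = y.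

Lemma lt_irr x : ~ lt M x x. Proof. pa; auto. Qed.
Lemma lt_trans x y z : lt M x y -> lt M y z -> lt M x z. Proof. pa; eauto. Qed.
Lemma trichot x y : lt M x y \/ x = y \/ lt M y x. Proof. pa; auto. Qed.
Lemma add_0 x : add M x (zero M) = x. Proof. pa; apply add0mul0. Qed.
Lemma add_C x y : add M x y = add M y x. Proof. pa; auto. Qed.
Lemma lt_add_r x y z : lt M x y -> lt M (add M x z) (add M y z). Proof. pa; auto. Qed.
Lemma le_0 x : mle (zero M) x. Proof. pa; unfold mle; destruct (nonneg x); [right|left]; auto. Qed.
Lemma lt_succ x : lt M x (add M x (one M)).
Proof. pa. pose proof (addmono _ _ x lt01). rewrite (addC (zero M)), (addC (one M)), add_0 in H. auto. Qed.
Lemma succ_le x y : lt M x y -> mle (add M x (one M)) y.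
Proof.
  pa; intros H. destruct (subex _ _ H) as [z Hz]. subst y.
  destruct (nonneg z) as [<-|Hz].
  - rewrite add_0 in H. exfalso; eapply irr; eauto.
  - destruct (pos1 _ Hz) as [<-|H1]; [right; auto|left].
    rewrite (addC x), (addC x). apply addmono; auto.
Qed.
Lemma le_trans x y z : mle x y -> mle y z -> mle x z.
Proof. unfold mle. intros [h|h] [h'|h']; subst; first [left; eauto using lt_trans; fail | right; reflexivity]. Qed.
Lemma lt_le_trans x y z : lt M x y -> mle y z -> lt M x z.
Proof. unfold mle in *.  intros h [h'|h']; subst; eauto using lt_trans. Qed.
Lemma le_lt_trans x y z : mle x y -> lt M y z -> lt M x z.
Proof. unfold mle in *.  intros [h|h] h'; subst; eauto using lt_trans. Qed.
Lemma le_refl x : mle x x. Proof. unfold mle in *.  right; auto. Qed.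
Lemma lt_le x y : lt M x y -> mle x y. Proof. unfold mle in *.  left; auto. Qed.
Lemma lt_succ_inv x y : lt M x (add M y (one M)) -> mle x y.
Proof.
  intros H. destruct (trichot x y) as [h|[h|h]]; [left; auto|right; auto|].
  exfalso. apply (lt_irr x). eapply lt_le_trans; [exact H|apply succ_le; auto].
Qed.
Lemma not_lt_0 x : ~ lt M x (zero M).
Proof. intros H. destruct (le_0 x) as [h|h]; subst; [apply (lt_irr x); eauto using lt_trans | eapply lt_irr; eauto]. Qed.
Lemma le_succ x y : mle x y -> mle (add M x (one M)) (add M y (one M)).
Proof. unfold mle in *.  intros [h|h]; [left; apply lt_add_r; auto|right; subst; auto]. Qed.
Lemma le_lt_succ x y : mle x y -> lt M x (add M y (one M)).
Proof. intros h; eapply le_lt_trans; [exact h|apply lt_succ]. Qed.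
Lemma max2 x y : exists z, mle x z /\ mle y z.
Proof. unfold mle in *.  destruct (trichot x y) as [h|[h|h]]; [exists y|exists y|exists x]; subst; split; auto using le_refl, lt_le. Qed.
Lemma gt2 x y : exists z, lt M x z /\ lt M y z.
Proof. destruct (max2 x y) as [z [h1 h2]]; exists (add M z (one M)); split; eapply le_lt_trans; eauto using lt_succ. Qed.
Lemma pos_of_ne x : x <> zero M -> lt M (zero M) x.
Proof. intros h. destruct (le_0 x) as [h'|h']; auto; congruence. Qed.

Definition Def (m : nat) (P : (nat -> M) -> Prop) :=
  exists p, Sigma0Sigma m p /\ forall e, sat M e p <-> P e.

Lemma def_ext m P Q : Def m P -> (forall e, P e <-> Q e) -> Def m Q.
Proof. intros [p [h1 h2]] h; exists p; split; auto; intro e; rewrite h2; auto. Qed.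
Lemma def_not m P : Def m P -> Def m (fun e => ~ P e).
Proof. intros [p [h1 h2]]; exists (fNot p); split; [apply ssNot; auto|intro e; simpl; rewrite h2; tauto]. Qed.
Lemma def_and m P Q : Def m P -> Def m Q -> Def m (fun e => P e /\ Q e).
Proof. intros [p [h1 h2]] [q [h3 h4]]; exists (fAnd p q); split; [apply ssAnd; auto|intro e; simpl; rewrite h2, h4; tauto]. Qed.
Lemma def_or m P Q : Def m P -> Def m Q -> Def m (fun e => P e \/ Q e).
Proof. intros [p [h1 h2]] [q [h3 h4]]; exists (fOr p q); split; [apply ssOr; auto|intro e; simpl; rewrite h2, h4; tauto]. Qed.
Lemma def_imp m P Q : Def m P -> Def m Q -> Def m (fun e => P e -> Q e).
Proof. intros [p [h1 h2]] [q [h3 h4]]; exists (fImp p q); split; [apply ssImp; auto|intro e; simpl; rewrite h2, h4; tauto]. Qed.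
Lemma def_ball m t P : Def m P -> Def m (fun e => forall x, lt M x (eval M e t) -> P (scons x e)).
Proof. intros [p [h1 h2]]; exists (fBAll t p); split; [apply ssBAll; auto|intro e; simpl; setoid_rewrite h2; tauto]. Qed.
Lemma def_bex m t P : Def m P -> Def m (fun e => exists x, lt M x (eval M e t) /\ P (scons x e)).
Proof. intros [p [h1 h2]]; exists (fBEx t p); split; [apply ssBEx; auto|intro e; simpl; setoid_rewrite h2; tauto]. Qed.
Lemma def_ren m f P : Def m P -> Def m (fun e => P (fun k => e (f k))).
Proof. intros [p [h1 h2]]; exists (ren f p); split; [apply S0S_ren; auto|intro e; rewrite sat_ren; auto]. Qed.
Lemma def_delta0 m p : Delta0 p -> Def m (fun e => sat M e p).
Proof. intros h; exists p; split; [constructor; apply Delta0_SigPi; auto|tauto]. Qed.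
Lemma def_lt m t1 t2 : Def m (fun e => lt M (eval M e t1) (eval M e t2)).
Proof. apply (def_delta0 m (fLt t1 t2)); constructor. Qed.
Lemma def_eq m t1 t2 : Def m (fun e => eval M e t1 = eval M e t2).
Proof. apply (def_delta0 m (fEq t1 t2)); constructor. Qed.
Lemma def_le m t1 t2 : Def m (fun e => mle (eval M e t1) (eval M e t2)).
Proof. apply def_or; [apply def_lt|apply def_eq]. Qed.
Lemma def_sig m p : IsSigma m p -> Def m (fun e => sat M e p).
Proof. intros h; exists p; split; [constructor; auto|tauto]. Qed.
Lemma def_pi m p : IsPi m p -> Def m (fun e => sat M e p).
Proof.
  intros h. destruct (proj2 SigPi_dual _ _ h) as [q [hq hs]].
  exists (fNot q); split; [apply ssNot; apply ssBase; auto|intro e; simpl; rewrite hs; tauto].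
Qed.
Lemma def_mono m m' P : Def m P -> m <= m' -> Def m' P.
Proof. intros [p [h1 h2]] h; exists p; split; auto; eapply S0S_mono; eauto. Qed.
Lemma def_sub m t P : Def m P -> Def m (fun e => P (scons (eval M e t) e)).
Proof.
  intros h.
  assert (h' := def_bex m (tplus t tone) _ (def_and m _ _ (def_eq m (tvar 0) (rent S t)) h)).
  eapply def_ext; [exact h'|]. intro e; cbn beta. simpl eval. setoid_rewrite eval_rent. simpl.
  split; [intros [x [_ [hx hp]]]; subst; auto|intros hp; exists (eval M e t); split; auto using lt_succ].
Qed.


Variable n : nat.
Hypothesis HI : IDelta0 M.
Hypothesis HW : forall p, Sigma0Sigma n p -> WR_inst M p.

Definition Coll_sem (P : (nat -> M) -> Prop) :=
  forall e a, (forall x, lt M x a -> exists y, P (scons y (scons x e))) ->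
    exists b, forall x, lt M x a -> exists y, lt M y b /\ P (scons y (scons x e)).

Lemma WR_sem P : Def n P -> forall e a,
  (forall X, exists Y, lt M Y a /\ P (scons Y (scons X e))) ->
  exists Y, lt M Y a /\ forall B, exists X, lt M B X /\ P (scons Y (scons X e)).
Proof.
  intros [p [hp hs]] e a H.
  destruct (HW p hp e a) as [Y [hY H']].
  - intro X; destruct (H X) as [Y [h1 h2]]; exists Y; split; auto; apply hs; auto.
  - exists Y; split; auto; intro B; destruct (H' B) as [X [h1 h2]]; exists X; split; auto; apply hs; auto.
Qed.

Ltac envext := apply functional_extensionality; let k := fresh "k" in intro k;
  do 8 (destruct k as [|k]; [reflexivity|]); reflexivity.

Definition fA (k : nat) : nat := match k with 0 => 0 | 1 => 1 | S (S j) => S (S (S (S j))) end.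

Lemma collA P : Def n P -> Coll_sem P.
Proof.
  intros hP e a H. apply NNPP; intro Hn.
  assert (hD : Def n (fun E : nat -> M => lt M (E 0) (E 2) /\ forall y, lt M y (E 1) -> ~ P (fun k => scons y E (fA k)))).
  { apply def_and; [apply (def_lt n (tvar 0) (tvar 2))|].
    apply (def_ball n (tvar 1) (fun E => ~ P (fun k => E (fA k)))). apply def_not, def_ren; auto. }
  assert (Henv : forall y x X, (fun k => scons y (scons x (scons X (scons a e))) (fA k)) = scons y (scons x e)) by (intros; envext).
  destruct (WR_sem _ hD (scons a e) a) as [Y [hY HB]].
  - intro X.
    assert (H0 : exists x, lt M x a /\ forall y, lt M y X -> ~ P (scons y (scons x e))).
    { apply NNPP; intro h2; apply Hn; exists X; intros x hx; apply NNPP; intro h3; apply h2; exists x; split; auto; intros y hy hp; apply h3; exists y; auto. }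
    destruct H0 as [x [hx hn]]; exists x; split; auto; split; auto.
    intros y hy; simpl. rewrite Henv; auto.
  - destruct (H Y hY) as [y hy]. destruct (HB y) as [X [hX [_ hD2]]].
    apply (hD2 y hX). simpl. rewrite Henv; auto.
Qed.

Definition Ind_sem m := forall P, Def m P -> forall e, P (scons (zero M) e) ->
  (forall x, P (scons x e) -> P (scons (add M x (one M)) e)) -> forall x, P (scons x e).

Lemma Ind0 : Ind_sem 0.
Proof.
  intros P [p [hp hs]] e h0 hS x. apply hs.
  apply (HI p (S0S_0 _ hp) e); [apply hs; auto|intros y hy; apply hs, hS, hs; auto].
Qed.

Definition fB (k : nat) : nat := match k with 0 => 0 | S j => S (S j) end.

Lemma breakpoint m Q : Ind_sem m -> Def m Q -> forall e a, Q (scons (zero M) e) -> ~ Q (scons a e) ->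
  exists x, lt M x a /\ Q (scons x e) /\ ~ Q (scons (add M x (one M)) e).
Proof.
  intros HInd hQ e a h0 ha. apply NNPP; intro Hn.
  assert (hR : Def m (fun E => mle (E 0) (E 1) -> Q (fun k => E (fB k)))).
  { apply def_imp; [apply (def_le m (tvar 0) (tvar 1))|apply def_ren; auto]. }
  assert (Henv : forall z, (fun k => scons z (scons a e) (fB k)) = scons z e) by (intros; envext).
  assert (HR := HInd _ hR (scons a e)). simpl in HR. setoid_rewrite Henv in HR.
  apply ha. apply HR; [intros _; auto| |apply le_refl].
  intros x hx hle. assert (hxa : lt M x a) by (eapply lt_le_trans; [apply lt_succ|exact hle]).
  apply NNPP; intro hq; apply Hn; exists x; split; auto. split; auto. apply hx; apply lt_le; auto.
Qed.

Definition fS (k : nat) : nat := match k with 0 => 1 | 1 => 0 | j => j end.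
Lemma swap_env x s (e : nat -> M) : (fun k => scons x (scons s e) (fS k)) = scons s (scons x e).
Proof. envext. Qed.

Lemma atom_approx k : forall m p, IsSigma m p -> m = S k -> exists A : (nat -> M) -> Prop,
  Def k A /\ (forall s e, A (scons s e) -> sat M e p) /\
  (forall s s' e, mle s s' -> A (scons s e) -> A (scons s' e)) /\
  (forall e, sat M e p -> exists s, A (scons s e)).
Proof.
  intros m p H; induction H; intros Hm; try discriminate.
  - injection Hm as ->. exists (fun E => sat M (fun j => E (S j)) p).
    split; [apply (def_ren k S (fun e => sat M e p)), def_pi; auto|].
    split; [intros s e h; exact h|split; [intros s s' e _ h; exact h|]].
    intros e hp; exists (zero M); exact hp.
  - destruct (IHIsSigma Hm) as [A [hA [hs [hm hc]]]].
    exists (fun E => exists w, lt M w (E 0) /\ A (fun j => scons w E (fS j))).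
    split; [apply (def_bex k (tvar 0) (fun E => A (fun j => E (fS j)))), def_ren; auto|].
    split; [|split].
    + intros s e [w [hw hA']]. rewrite swap_env in hA'. exists w; eapply hs; eauto.
    + intros s s' e hle [w [hw hA']]. rewrite swap_env in *. exists w; split; [eapply lt_le_trans; eauto|]. rewrite swap_env. eapply hm; eauto.
    + intros e [w hw]. destruct (hc _ hw) as [s1 hs1]. destruct (gt2 w s1) as [z [h1 h2]].
      exists z, w; split; auto. rewrite swap_env. eapply hm; [apply lt_le; eauto|auto].
Qed.

Definition ApproxP k p := exists A G : (nat -> M) -> Prop,
  Def k A /\ Def (S k) G /\ (forall e, exists s, G (scons s e)) /\
  (forall e s s', mle s s' -> G (scons s e) -> G (scons s' e)) /\
  (forall e s s', mle s s' -> G (scons s e) -> (A (scons s' e) <-> sat M e p)).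

Lemma approx_bin k p q (op : Prop -> Prop -> Prop) (r : form) :
  (forall P Q, Def k P -> Def k Q -> Def k (fun E => op (P E) (Q E))) ->
  (forall P1 P2 Q1 Q2, (P1 <-> P2) -> (Q1 <-> Q2) -> (op P1 Q1 <-> op P2 Q2)) ->
  (forall e, sat M e r <-> op (sat M e p) (sat M e q)) ->
  ApproxP k p -> ApproxP k q -> ApproxP k r.
Proof.
  intros hop hiff hr [A1 [G1 [hA1 [hG1 [he1 [hm1 hc1]]]]]] [A2 [G2 [hA2 [hG2 [he2 [hm2 hc2]]]]]].
  exists (fun E => op (A1 E) (A2 E)), (fun E => G1 E /\ G2 E).
  split; [auto|split; [apply def_and; auto|split; [|split]]].
  - intro e. destruct (he1 e) as [s1 g1]; destruct (he2 e) as [s2 g2]. destruct (max2 s1 s2) as [z [l1 l2]].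
    exists z; split; eauto.
  - intros e s s' hle [g1 g2]; split; eauto.
  - intros e s s' hle [g1 g2]. rewrite hr. apply hiff; eauto.
Qed.

Lemma approx k p : S k <= n -> Sigma0Sigma (S k) p -> ApproxP k p.
Proof.
  intros Hk H; induction H.
  - destruct (atom_approx k _ _ H eq_refl) as [A [hA [hs [hm hc]]]].
    exists A, (fun E => sat M (fun j => E (S j)) p -> A E).
    split; [auto|split; [apply def_imp; [apply (def_ren (S k) S (fun e => sat M e p)), def_sig; auto| apply (def_mono k); auto]|]].
    split; [|split].
    + intro e. destruct (classic (sat M e p)) as [h|h];
        [destruct (hc e h) as [s hs']; exists s; auto| exists (zero M); intro h'; contradiction].
    + intros e s s' hle hG hp. eapply hm; eauto.
    + intros e s s' hle hG. split; [apply hs|intro hp; eapply hm; eauto].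
  - destruct IHSigma0Sigma as [A [G [hA [hG [he [hm hc]]]]]].
    exists (fun E => ~ A E), G. split; [apply def_not; auto|split; [auto|split; [auto|split; [auto|]]]].
    intros e s s' hle hg; simpl; rewrite (hc e s s' hle hg); tauto.
  - apply (approx_bin k p q and); auto. apply def_and. intros; tauto. intros; simpl; tauto.
  - apply (approx_bin k p q or); auto. apply def_or. intros; tauto. intros; simpl; tauto.
  - apply (approx_bin k p q (fun a b => a -> b)); auto. apply def_imp. intros; tauto. intros; simpl; tauto.
  - destruct IHSigma0Sigma as [A [G [hA [hG [he [hm hc]]]]]].
    exists (fun E => forall x, lt M x (eval M E (rent S t)) -> A (fun j => scons x E (fS j))),
           (fun E => forall x, lt M x (eval M E (rent S t)) -> G (fun j => scons x E (fS j))).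
    split; [apply (def_ball k (rent S t) (fun E => A (fun j => E (fS j)))), def_ren; auto|].
    split; [apply (def_ball (S k) (rent S t) (fun E => G (fun j => E (fS j)))), def_ren; auto|].
    split; [|split].
    + intro e. destruct (collA G (def_mono _ _ _ hG Hk) e (eval M e t)) as [b hb].
      { intros x _; apply he. }
      exists b. intros x hx. rewrite eval_rent in hx. rewrite swap_env.
      destruct (hb x hx) as [y [hy gy]]. eapply hm; [apply lt_le; eauto|eauto].
    + intros e s s' hle hg x hx. rewrite eval_rent in hx. setoid_rewrite eval_rent in hg. rewrite swap_env.
      specialize (hg x hx). rewrite swap_env in hg. eapply hm; eauto.
    + intros e s s' hle hg. simpl sat. setoid_rewrite eval_rent. setoid_rewrite swap_env.
      setoid_rewrite eval_rent in hg. setoid_rewrite swap_env in hg.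
      split; intros h x hx; specialize (h x hx); specialize (hg x hx); apply (hc _ _ _ hle hg); auto.
  - destruct IHSigma0Sigma as [A [G [hA [hG [he [hm hc]]]]]].
    exists (fun E => exists x, lt M x (eval M E (rent S t)) /\ A (fun j => scons x E (fS j))),
           (fun E => forall x, lt M x (eval M E (rent S t)) -> G (fun j => scons x E (fS j))).
    split; [apply (def_bex k (rent S t) (fun E => A (fun j => E (fS j)))), def_ren; auto|].
    split; [apply (def_ball (S k) (rent S t) (fun E => G (fun j => E (fS j)))), def_ren; auto|].
    split; [|split].
    + intro e. destruct (collA G (def_mono _ _ _ hG Hk) e (eval M e t)) as [b hb].
      { intros x _; apply he. }
      exists b. intros x hx. rewrite eval_rent in hx. rewrite swap_env.
      destruct (hb x hx) as [y [hy gy]]. eapply hm; [apply lt_le; eauto|eauto].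
    + intros e s s' hle hg x hx. rewrite eval_rent in hx. setoid_rewrite eval_rent in hg. rewrite swap_env.
      specialize (hg x hx). rewrite swap_env in hg. eapply hm; eauto.
    + intros e s s' hle hg. simpl sat. setoid_rewrite eval_rent. setoid_rewrite swap_env.
      setoid_rewrite eval_rent in hg. setoid_rewrite swap_env in hg.
      split; intros [x [hx h]]; exists x; split; auto; specialize (hg x hx); apply (hc _ _ _ hle hg); auto.
Qed.

Definition fQ (k : nat) : nat := match k with 0 => 2 | 1 => 0 | S (S j) => S (S (S (S j))) end.
Lemma def_Aat k A u : Def k A ->
  Def k (fun E => A (scons (E 1) (scons (eval M E u) (fun j => E (S (S (S j))))))).
Proof.
  intros hA. eapply def_ext; [apply (def_sub k u (fun E => A (fun j => E (fQ j)))), def_ren; exact hA|].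
  intro E; cbn beta.
  assert (h : (fun j => scons (eval M E u) E (fQ j)) = scons (E 1) (scons (eval M E u) (fun j => E (S (S (S j)))))) by envext.
  rewrite h; tauto.
Qed.

Lemma ind_all : forall m, m <= n -> Ind_sem m.
Proof.
  induction m as [|k IH]; intros Hm; [apply Ind0|].
  intros P [p [hp hs]] e h0 hS a. apply hs. apply NNPP; intro ha.
  assert (h0' : sat M (scons (zero M) e) p) by (apply hs; auto).
  assert (hS' : forall x, sat M (scons x e) p -> sat M (scons (add M x (one M)) e) p) by (intros x hx; apply hs, hS, hs; auto).
  clear h0 hS.
  destruct (approx k p Hm hp) as [A [G [hA [hG [he [hm hc]]]]]].
  assert (IHk := IH ltac:(lia)).
  assert (hD : Def k (fun E : nat -> M => lt M (E 0) (E 2) /\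
     ((A (scons (E 1) (scons (E 0) (fun j => E (S (S (S j)))))) /\ ~ A (scons (E 1) (scons (add M (E 0) (one M)) (fun j => E (S (S (S j))))))) \/
      ~ A (scons (E 1) (scons (zero M) (fun j => E (S (S (S j)))))) \/ A (scons (E 1) (scons (E 2) (fun j => E (S (S (S j))))))))).
  { apply def_and; [apply (def_lt k (tvar 0) (tvar 2))|].
    apply def_or; [apply def_and; [apply (def_Aat k A (tvar 0) hA)| apply def_not, (def_Aat k A (tplus (tvar 0) tone) hA)]|].
    apply def_or; [apply def_not, (def_Aat k A tzero hA)|apply (def_Aat k A (tvar 2) hA)]. }
  destruct (WR_sem _ (def_mono k n _ hD ltac:(lia)) (scons a e) a) as [x [hx HB]].
  - intro s.
    destruct (classic (A (scons s (scons (zero M) e)) /\ ~ A (scons s (scons a e)))) as [[h1 h2]|h].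
    + assert (hQ : Def k (fun F => A (scons (F 1) (scons (F 0) (fun j => F (S (S j))))))).
      { eapply def_ext; [apply def_ren with (f := fS); exact hA|]. intro F; cbn beta.
        assert (hh : (fun j => F (fS j)) = scons (F 1) (scons (F 0) (fun j => F (S (S j))))) by envext.
        rewrite hh; tauto. }
      destruct (breakpoint k _ IHk hQ (scons s e) a h1 h2) as [x [hx [hx1 hx2]]].
      exists x; split; auto; simpl; split; auto.
    + assert (ha0 : lt M (zero M) a).
      { apply pos_of_ne. intro; subst a; contradiction. }
      exists (zero M); split; auto; simpl; split; auto; right.
      apply NNPP; intro h'; apply h; split; apply NNPP; intro; apply h'; tauto.
  - simpl in HB.
    destruct (he (scons (zero M) e)) as [s1 g1].
    destruct (he (scons a e)) as [s2 g2].
    destruct (he (scons x e)) as [s3 g3].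
    destruct (he (scons (add M x (one M)) e)) as [s4 g4].
    destruct (max2 s1 s2) as [z1 [l1 l2]]. destruct (max2 s3 s4) as [z2 [l3 l4]].
    destruct (max2 z1 z2) as [z [l5 l6]].
    destruct (HB z) as [X [hX [_ hd]]].
    assert (lz : forall s, mle s z -> mle s X) by (intros; eapply le_trans; eauto using lt_le).
    assert (c1 := hc _ _ X (lz _ (le_trans _ _ _ l1 l5)) g1).
    assert (c2 := hc _ _ X (lz _ (le_trans _ _ _ l2 l5)) g2).
    assert (c3 := hc _ _ X (lz _ (le_trans _ _ _ l3 l6)) g3).
    assert (c4 := hc _ _ X (lz _ (le_trans _ _ _ l4 l6)) g4).
    destruct hd as [[d1 d2]|[d1|d1]].
    + apply d2, c4, hS', c3, d1.
    + apply d1, c1, h0'.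
    + apply ha, c2, d1.
Qed.

Definition PiS (P : (nat -> M) -> Prop) := exists T, Def n T /\ forall e, P e <-> forall w, T (scons w e).

Definition fK (k : nat) : nat := match k with 0 => 0 | 1 => 1 | 2 => 2 | S (S (S j)) => S (S (S (S (S (S j))))) end.
Definition Kp (T : (nat -> M) -> Prop) (F : nat -> M) : Prop :=
  exists x, lt M x (F 2) /\ forall v, lt M v (F 0) -> exists w, lt M w (F 1) /\
    ~ T (fun k => scons w (scons v (scons x F)) (fK k)).

Lemma fK_env w v x b t a (e : nat -> M) :
  (fun k => scons w (scons v (scons x (scons b (scons t (scons a e))))) (fK k)) = scons w (scons v (scons x e)).
Proof. envext. Qed.

Lemma Kp_spec T b t a e : Kp T (scons b (scons t (scons a e))) <->
  exists x, lt M x a /\ forall v, lt M v b -> exists w, lt M w t /\ ~ T (scons w (scons v (scons x e))).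
Proof. unfold Kp; simpl. setoid_rewrite fK_env. reflexivity. Qed.

Definition f1 k := match k with 0 => 0 | 1 => 2 | 2 => 3 | S (S (S j)) => S (S (S (S j))) end.
Definition f2 k := match k with 0 => 0 | 1 => 3 | 2 => 4 | S (S (S j)) => S (S (S (S (S j)))) end.
Definition f3 k := match k with 0 => 0 | 1 => 1 | 2 => 3 | S (S (S j)) => S (S (S (S (S (S j))))) end.
Definition Dl T (E : nat -> M) : Prop := lt M (E 0) (E 2) /\ exists b, lt M b (add M (E 1) (one M)) /\
  (Kp T (fun k => scons b E (f1 k)) /\ (b = E 1 \/ ~ Kp T (fun k => scons (add M b (one M)) (scons b E) (f2 k))) /\
   forall v, lt M v b -> exists w, lt M w (E 1) /\ ~ T (fun k => scons w (scons v (scons b E)) (f3 k))).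

Lemma f1_env b x t a (e : nat -> M) : (fun k => scons b (scons x (scons t (scons a e))) (f1 k)) = scons b (scons t (scons a e)).
Proof. envext. Qed.
Lemma f2_env z b x t a (e : nat -> M) : (fun k => scons z (scons b (scons x (scons t (scons a e)))) (f2 k)) = scons z (scons t (scons a e)).
Proof. envext. Qed.
Lemma f3_env w v b x t a (e : nat -> M) : (fun k => scons w (scons v (scons b (scons x (scons t (scons a e))))) (f3 k)) = scons w (scons v (scons x e)).
Proof. envext. Qed.

Lemma Dl_spec T x t a e : Dl T (scons x (scons t (scons a e))) <-> lt M x a /\ exists b, lt M b (add M t (one M)) /\
  (Kp T (scons b (scons t (scons a e))) /\ (b = t \/ ~ Kp T (scons (add M b (one M)) (scons t (scons a e)))) /\
   forall v, lt M v b -> exists w, lt M w t /\ ~ T (scons w (scons v (scons x e)))).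
Proof. unfold Dl; simpl. setoid_rewrite f1_env; setoid_rewrite f2_env; setoid_rewrite f3_env. reflexivity. Qed.

Lemma collB R : PiS R -> Coll_sem R.
Proof.
  intros [T [hT hR]] e a H. apply NNPP; intro Hn.
  assert (Fail : forall b, exists x, lt M x a /\ forall v, lt M v b -> exists w, ~ T (scons w (scons v (scons x e)))).
  { intro b. apply NNPP; intro h1. apply Hn. exists b. intros x hx. apply NNPP; intro h2. apply h1. exists x; split; auto.
    intros v hv. apply NNPP; intro h3. apply h2. exists v; split; auto. apply hR. intro w. apply NNPP; intro h4; apply h3; exists w; auto. }
  assert (hK : Def n (Kp T)).
  { exact (def_bex n (tvar 2) _ (def_ball n (tvar 1) _ (def_bex n (tvar 3) _ (def_not n _ (def_ren n fK T hT))))). }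
  assert (Kdown : forall t b b', mle b' b -> Kp T (scons b (scons t (scons a e))) -> Kp T (scons b' (scons t (scons a e)))).
  { intros t b b' hle. rewrite !Kp_spec. intros [x [hx h]]; exists x; split; auto. intros v hv; apply h; eapply lt_le_trans; eauto. }
  assert (K0 : forall t, Kp T (scons (zero M) (scons t (scons a e)))).
  { intro t; rewrite Kp_spec. destruct (Fail (zero M)) as [x [hx _]]. exists x; split; auto. intros v hv; exfalso; eapply not_lt_0; eauto. }
  assert (hD : Def n (Dl T)).
  { exact (def_and n _ _ (def_lt n (tvar 0) (tvar 2)) (def_bex n (tplus (tvar 1) tone) _ (def_and n _ _ (def_ren n f1 _ hK) (def_and n _ _ (def_or n _ _ (def_eq n (tvar 0) (tvar 2)) (def_not n _ (def_sub n (tplus (tvar 0) tone) _ (def_ren n f2 _ hK)))) (def_ball n (tvar 0) _ (def_bex n (tvar 3) _ (def_not n _ (def_ren n f3 _ hT)))))))). }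
  destruct (WR_sem _ hD (scons a e) a) as [x [hx HB]].
  - intro t.
    assert (hb : exists b, lt M b (add M t (one M)) /\ Kp T (scons b (scons t (scons a e))) /\
                   (b = t \/ ~ Kp T (scons (add M b (one M)) (scons t (scons a e))))).
    { destruct (classic (Kp T (scons t (scons t (scons a e))))) as [h|h].
      - exists t; split; [apply lt_succ|split; auto].
      - destruct (breakpoint n (Kp T) (ind_all n (le_n n)) hK (scons t (scons a e)) t (K0 t) h) as [b [hb [h1 h2]]].
        exists b; split; [eapply lt_trans; [exact hb|apply lt_succ]|split; auto]. }
    destruct hb as [b [hb [hKb hmax]]].
    pose proof hKb as hKb'. rewrite Kp_spec in hKb'. destruct hKb' as [x [hx hxv]].
    exists x; split; auto. rewrite Dl_spec. split; auto. exists b; split; auto.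
  - destruct (H x hx) as [v0 hv0]. rewrite hR in hv0.
    destruct (Fail (add M v0 (one M))) as [x' [hx' hf]].
    destruct (collA (fun F => ~ T F) (def_not _ _ hT) (scons x' e) (add M v0 (one M)) hf) as [c hc].
    destruct (max2 c (add M v0 (one M))) as [B [lB1 lB2]].
    destruct (HB B) as [t [ht hd]]. rewrite Dl_spec in hd. destruct hd as [_ [b [hb [hKb [hmax hall]]]]].
    assert (hKv : Kp T (scons (add M v0 (one M)) (scons t (scons a e)))).
    { rewrite Kp_spec. exists x'; split; auto. intros v hv. destruct (hc v hv) as [w [hw hnt]].
      exists w; split; auto. eapply lt_trans; [exact hw|]. eapply le_lt_trans; eauto. }
    assert (hvb : lt M v0 b).
    { destruct (trichot v0 b) as [h|[h|h]]; auto; exfalso;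
      assert (hle : mle b v0) by (unfold mle; auto);
      (assert (hbt : lt M b t) by (eapply le_lt_trans; [exact hle|]; eapply lt_le_trans; [apply lt_succ|]; apply lt_le; eapply le_lt_trans; eauto));
      (destruct hmax as [hm|hm]; [subst; eapply lt_irr; eauto|apply hm; eapply Kdown; [apply le_succ; exact hle|exact hKv]]). }
    destruct (hall v0 hvb) as [w [_ hw]]. apply hw, hv0.
Qed.

Definition fH k := match k with 0 => 0 | 1 => 1 | S (S j) => S (S (S j)) end.
Lemma fH_env w2 w1 w (e : nat -> M) : (fun k => scons w2 (scons w1 (scons w e)) (fH k)) = scons w2 (scons w1 e).
Proof. envext. Qed.

Lemma piS_ext P Q : PiS P -> (forall e, P e <-> Q e) -> PiS Q.
Proof. intros [T [hT hP]] h; exists T; split; auto; intro e; rewrite <- h; auto. Qed.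

Lemma piS_sig q : IsSigma n q -> PiS (fun e => sat M e q).
Proof.
  intros h. exists (fun E => sat M (fun j => E (S j)) q). split; [exact (def_ren n S _ (def_sig n q h))|].
  intro e; split; [intros hq w; exact hq|intros hw; exact (hw (zero M))].
Qed.

Lemma piS_ren f P : PiS P -> PiS (fun e => P (fun k => e (f k))).
Proof.
  intros [T [hT hP]]. exists (fun E => T (fun k => E (up f k))). split; [exact (def_ren n (up f) T hT)|].
  intro e. rewrite hP. setoid_rewrite scons_up. reflexivity.
Qed.

Lemma piS_all P : PiS P -> PiS (fun e => forall w1, P (scons w1 e)).
Proof.
  intros [T [hT hP]].
  exists (fun E => forall w1, lt M w1 (E 0) -> forall w2, lt M w2 (E 0) -> T (fun k => scons w2 (scons w1 E) (fH k))).
  split; [exact (def_ball n (tvar 0) _ (def_ball n (tvar 1) _ (def_ren n fH T hT)))|].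
  intro e. setoid_rewrite hP. setoid_rewrite fH_env. split.
  - intros h w w1 _ w2 _; apply h.
  - intros h w1 w2. destruct (gt2 w1 w2) as [w [h1 h2]]. apply (h w w1 h1 w2 h2).
Qed.

Lemma piS_bex t P : PiS P -> PiS (fun e => exists y, lt M y (eval M e t) /\ P (scons y e)).
Proof.
  intros [T [hT hP]].
  exists (fun E => exists y, lt M y (eval M E (rent S t)) /\ forall w', lt M w' (E 0) -> T (fun k => scons w' (scons y E) (fH k))).
  split; [exact (def_bex n (rent S t) _ (def_ball n (tvar 1) _ (def_ren n fH T hT)))|].
  intro e. setoid_rewrite hP. setoid_rewrite eval_rent. setoid_rewrite fH_env. split.
  - intros [y [hy h]] W; exists y; split; [exact hy|intros; apply h].
  - intros h. apply NNPP; intro hn.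
    assert (hc : forall y, lt M y (eval M e t) -> exists w, ~ T (scons w (scons y e))).
    { intros y hy. apply NNPP; intro h1. apply hn. exists y; split; auto. intro w; apply NNPP; intro h2; apply h1; exists w; auto. }
    destruct (collA (fun F => ~ T F) (def_not n T hT) e (eval M e t) hc) as [W hW].
    destruct (h W) as [y [hy hy2]]. destruct (hW y hy) as [w [hw hnt]]. apply hnt, hy2, hw.
Qed.

Lemma piS_pi : forall m q, IsPi m q -> m = S n -> PiS (fun e => sat M e q).
Proof.
  intros m q H; induction H; intros Hm; try discriminate.
  - injection Hm as ->. apply piS_sig; auto.
  - apply (piS_ext _ _ (piS_all _ (IHIsPi Hm))). intro; simpl; reflexivity.
Qed.

Definition Col (Q : (nat -> M) -> Prop) (E : nat -> M) :=
  exists y1, lt M y1 (E 0) /\ exists y2, lt M y2 (E 0) /\ Q (fun k => scons y2 (scons y1 E) (fH k)).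

Lemma PiS_Col Q : PiS Q -> PiS (Col Q).
Proof. intros h. exact (piS_bex (tvar 0) _ (piS_bex (tvar 1) _ (piS_ren fH Q h))). Qed.

Lemma Col_spec Q v e : Col Q (scons v e) <-> exists y1, lt M y1 v /\ exists y2, lt M y2 v /\ Q (scons y2 (scons y1 e)).
Proof. unfold Col; simpl. setoid_rewrite fH_env. reflexivity. Qed.

Lemma Col_ex Q e : (exists y1 y2, Q (scons y2 (scons y1 e))) <-> exists v, Col Q (scons v e).
Proof.
  setoid_rewrite Col_spec. split.
  - intros [y1 [y2 h]]. destruct (gt2 y1 y2) as [v [h1 h2]]. exists v, y1; split; auto; exists y2; auto.
  - intros [v [y1 [_ [y2 [_ h]]]]]; exists y1, y2; auto.
Qed.

Definition SigS P := exists Q, PiS Q /\ forall e, P e <-> exists y, Q (scons y e).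

Lemma sigS_sig : forall m p, IsSigma m p -> m = S (S n) -> SigS (fun e => sat M e p).
Proof.
  intros m p H; induction H; intros Hm; try discriminate.
  - injection Hm as ->. exists (fun E => sat M (fun j => E (S j)) p). split.
    + exact (piS_ren S _ (piS_pi _ _ H eq_refl)).
    + intro e; split; [intros h; exists (zero M); exact h|intros [y h]; exact h].
  - destruct (IHIsSigma Hm) as [Q [hQ hp]]. exists (Col Q). split; [apply PiS_Col; auto|].
    intro e. simpl sat. rewrite <- Col_ex. setoid_rewrite hp. reflexivity.
Qed.

Lemma coll_sig P : SigS P -> Coll_sem P.
Proof.
  intros [Q [hQ hP]] e a H.
  destruct (collB (Col Q) (PiS_Col Q hQ) e a) as [b hb].
  { intros x hx. destruct (H x hx) as [y hy]. rewrite hP in hy. destruct hy as [u hu]. apply Col_ex. exists y, u; exact hu. }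
  exists b. intros x hx. destruct (hb x hx) as [v [hv hc]]. rewrite Col_spec in hc.
  destruct hc as [y [hy [u [hu hq]]]]. exists y; split; [eapply lt_trans; eauto|]. apply hP. exists u; auto.
Qed.

End PA.

Theorem lemma5p6 (n : nat) (M : structure) :
  PAminus M -> models_WRSigma0Sigma n M -> models_BSigma (n + 2) M.
Proof.
  intros HPA [HI HW]. split; auto. intros p hp. replace (n + 2) with (S (S n)) in hp by lia.
  apply (coll_sig M HPA n HI HW (fun e => sat M e p)). eapply sigS_sig; eauto.
Qed.
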